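(* Let $(\mathcal{P},E,U_{E,\mathcal{P}},\mathrm{tok})$ be a system and $C$ a clustering function satisfying the standing properties with constant $\epsilon>0$. Let $\mathcal{A}$ be the set of players $Q$ with $|\mathrm{util}_Q(e,\mathrm{true})|\le\epsilon$ for all $e\in E$, let $\hat{\mathcal{P}}\subseteq\mathcal{A}$, and let $D\subset\mathcal{P}\setminus\hat{\mathcal{P}}$ be a set of delegates. Let $\mathrm{tok}'$ be a new token map in which the players of $\hat{\mathcal{P}}$ delegate all their tokens to $D$: $\mathrm{tok}'(Q)=0$ for $Q\in\hat{\mathcal{P}}$, $\mathrm{tok}'(d)\ge\mathrm{tok}(d)$ for $d\in D$ with $\mathrm{tok}'(D)=\mathrm{tok}(D)+\mathrm{tok}(\hat{\mathcal{P}})$, and $\mathrm{tok}'(Q)=\mathrm{tok}(Q)$ for all other $Q$; utilities are unchanged. If $\mathrm{tok}(\mathcal{A})\ge\mathrm{tok}'([d])$ for every $d\in D$ (where $[d]$ is the voting bloc of $d$), then $$\mathrm{VBE}_{C,\min}(E,\mathcal{P},U_{E,\mathcal{P}},\mathrm{tok}')\ \ge\ \mathrm{VBE}_{C,\min}(E,\mathcal{P},U_{E,\mathcal{P}},\mathrm{tok}).$$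
   Context: A system consists of a finite set of players $\mathcal{P}$, a token map $\mathrm{tok}:\mathcal{P}\to\mathbb{R}^+$ (extended to subsets by summation), binary elections $E=\{e_1,\dots,e_m\}$, and for each player utilities $\mathrm{util}_P(e,\mathrm{true})\in\mathbb{R}$ (with $\mathrm{util}_P(e,\mathrm{false})=-\mathrm{util}_P(e,\mathrm{true})$), forming the utility vector $U_{E,P}\in\mathbb{R}^m$. A clustering function $C$ is an equivalence relation $\sim_C$ on $\mathbb{R}^m$, partitioning players into voting blocs $\mathcal{P}/\!\sim_C$ via $P_i\sim_C P_j$ iff $U_{E,P_i}\sim_C U_{E,P_j}$; $[P]$ is the bloc of $P$. Standing properties of $C$: (i) there is a constant $\epsilon>0$ such that if $|\mathrm{util}_{P_i}(e,\mathrm{true})|\le\epsilon$ and $|\mathrm{util}_{P_j}(e,\mathrm{true})|\le\epsilon$ for all $e\in E$, then $P_i\sim_C P_j$; (ii) if $\mathrm{util}_{P_i}(e,\mathrm{true})$ and $\mathrm{util}_{P_j}(e,\mathrm{true})$ have the same sign for every $e\in E$, then $P_i\sim_C P_j$. $\mathrm{VBE}_{C,\min}(E,\mathcal{P},U_{E,\mathcal{P}},\mathrm{tok})=-\log_2\big(\max_{B\in\mathcal{P}/\sim_C}\mathrm{tok}(B)/\sum_{P\in\mathcal{P}}\mathrm{tok}(P)\big)$. *)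

(* Defs.v *)
From HB Require Import structures.
From mathcomp Require Import all_boot all_order all_algebra.
From mathcomp Require Import reals exp.
Set Implicit Arguments. Unset Strict Implicit. Unset Printing Implicit Defensive.
Import Order.TTheory GRing.Theory Num.Theory.
Local Open Scope ring_scope.

Section VBE.
Variables (R : realType) (Pl : finType) (m : nat).

Definition log2 (x : R) : R := ln x / ln 2.

(* utility vector U_{E,P} in R^m, from util_P(e,true) *)
Definition uvec (u : Pl -> 'I_m -> R) (p : Pl) : 'rV[R]_m := \row_(e < m) u p e.

Definition bloc (C : rel 'rV[R]_m) (u : Pl -> 'I_m -> R) (p : Pl) : {set Pl} :=
  [set q | C (uvec u q) (uvec u p)].

Definition blocs (C : rel 'rV[R]_m) (u : Pl -> 'I_m -> R) : {set {set Pl}} :=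
  [set bloc C u p | p : Pl].

Definition tokS (tok : Pl -> R) (B : {set Pl}) : R := \sum_(q in B) tok q.

Definition VBEmin (C : rel 'rV[R]_m) (u : Pl -> 'I_m -> R) (tok : Pl -> R) : R :=
  - log2 ((\big[Num.max/0]_(B in blocs C u) tokS tok B) / \sum_(q : Pl) tok q).

Definition clustering_ok (C : rel 'rV[R]_m) (u : Pl -> 'I_m -> R) (eps : R) : Prop :=
  [/\ (forall x, C x x), (forall x y, C x y -> C y x) &
      (forall x y z, C x y -> C y z -> C x z)] /\
  [/\ 0 < eps,
      (forall pi pj : Pl, (forall e, `|u pi e| <= eps) -> (forall e, `|u pj e| <= eps) ->
           C (uvec u pi) (uvec u pj)) &
      (forall pi pj : Pl, (forall e, Num.sg (u pi e) = Num.sg (u pj e)) ->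
           C (uvec u pi) (uvec u pj))].

Definition smallA (u : Pl -> 'I_m -> R) (eps : R) : {set Pl} :=
  [set q | [forall e, `|u q e| <= eps]].

End VBE.

(* Main.v *)
Require Import Defs.
From HB Require Import structures.
From mathcomp Require Import all_boot all_order all_algebra.
From mathcomp Require Import reals exp.
Import Order.TTheory GRing.Theory Num.Theory.
Local Open Scope ring_scope.

Section Helpers.
Variables (R : realType) (I : finType).

Lemma bmax_le (S : {pred I}) (F : I -> R) x :
  0 <= x -> (forall B, B \in S -> F B <= x) -> \big[Num.max/0]_(B in S) F B <= x.
Proof.
move=> x0 H; apply: (@big_ind _ (fun y => y <= x)) => //.
  by move=> a b ha hb; rewrite ge_max ha hb.
Qed.

Lemma le_bmax (S : {pred I}) (F : I -> R) B :
  B \in S -> F B <= \big[Num.max/0]_(B in S) F B.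
Proof. by move=> hB; rewrite (bigD1 B) //= le_max lexx. Qed.

Lemma sum_sub (A B : {set I}) (f : I -> R) : (forall q, 0 <= f q) ->
  A \subset B -> \sum_(q in A) f q <= \sum_(q in B) f q.
Proof.
move=> f0 sAB; rewrite [X in _ <= X](bigID (fun q => q \in A)) /=.
have -> : \sum_(i in B | i \in A) f i = \sum_(q in A) f q.
  apply: eq_bigl => q; case: (boolP (q \in A)) => qA; rewrite ?andbF ?andbT //.
  exact: subsetP sAB q qA.
by rewrite lerDl sumr_ge0.
Qed.
End Helpers.

Lemma bmax_ge0 (R : realType) (I : finType) (S : {pred I}) (F : I -> R) :
  0 <= \big[Num.max/0]_(B in S) F B.
Proof.
elim/big_rec: _ => // i x _ hx.
by rewrite le_max hx orbT.
Qed.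

Theorem theorem4 (R : realType) (Pl : finType) (m : nat)
  (u : Pl -> 'I_m -> R) (tok tok' : Pl -> R)
  (C : rel 'rV[R]_m) (eps : R)
  (Phat D : {set Pl}) :
  (forall q, 0 < tok q) ->
  clustering_ok C u eps ->
  Phat \subset smallA u eps ->
  D \subset ~: Phat ->
  (forall q, q \in Phat -> tok' q = 0) ->
  (forall d, d \in D -> tok d <= tok' d) ->
  tokS tok' D = tokS tok D + tokS tok Phat ->
  (forall q, q \notin Phat -> q \notin D -> tok' q = tok q) ->
  (forall d, d \in D -> tokS tok' (bloc C u d) <= tokS tok (smallA u eps)) ->
  VBEmin C u tok <= VBEmin C u tok'.
Proof.
move=> tpos [[Crefl Csym Ctrans] [eps0 Csmall _]] sPA sDP tP tD tDsum tO tB.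
have DnP q : q \in D -> q \notin Phat.
  by move=> qD; have := subsetP sDP q qD; rewrite inE.
have t'ge0 q : 0 <= tok' q.
  case: (boolP (q \in Phat)) => qP; first by rewrite tP.
  case: (boolP (q \in D)) => qD.
    by apply: le_trans (tD q qD); apply: ltW.
  by rewrite tO // ltW.
have split (f : Pl -> R) : \sum_q f q =
    \sum_(q in Phat) f q + \sum_(q in D) f q + \sum_(q | (q \notin Phat) && (q \notin D)) f q.
  rewrite (bigID (fun q => q \in Phat)) /= -addrA; congr (_ + _).
  rewrite (bigID (fun q => q \in D)) /=; congr (_ + _).
  by apply: eq_bigl => q; case: (boolP (q \in D)) => qD; rewrite ?andbF ?andbT ?DnP.
have Tsum : \sum_q tok' q = \sum_q tok q.
  rewrite split [RHS]split.
  have -> : \sum_(q in Phat) tok' q = 0 by rewrite big1 // => q /tP.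
  rewrite add0r; move: tDsum; rewrite /tokS => ->.
  rewrite [_ + tokS _ _]addrC /tokS; congr (_ + _).
  by apply: eq_bigr => q /andP[a b]; rewrite tO.
have blocE p d : d \in bloc C u p -> bloc C u p = bloc C u d.
  rewrite inE => hd; apply/setP => q; rewrite !inE; apply/idP/idP => hq.
    exact: Ctrans hq (Csym _ _ hd).
  exact: Ctrans hq hd.
set M := \big[Num.max/0]_(B in blocs C u) tokS tok B.
set M' := \big[Num.max/0]_(B in blocs C u) tokS tok' B.
have AleM : tokS tok (smallA u eps) <= M.
  case: (set_0Vmem (smallA u eps)) => [->|[a ha]].
    by rewrite /tokS big_set0 bmax_ge0.
  have hb : bloc C u a \in blocs C u by apply/imsetP; exists a.
  apply: le_trans (@le_bmax _ _ _ (tokS tok) _ hb).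
  rewrite /tokS; apply: sum_sub; first by move=> q; apply: ltW.
  apply/subsetP => q hq; rewrite inE; apply: Csmall.
    by move: hq; rewrite inE => /forallP.
  by move: ha; rewrite inE => /forallP.
have M'M : M' <= M.
  apply: bmax_le; first exact: bmax_ge0.
  move=> B /imsetP[p _ ->].
  case: (boolP [exists d in D, d \in bloc C u p]).
    move=> /existsP[d /andP[dD dB]]; rewrite (blocE _ _ dB).
    exact: le_trans (tB d dD) AleM.
  rewrite negb_exists => /forallP hn.
  have hb : bloc C u p \in blocs C u by apply/imsetP; exists p.
  apply: le_trans (@le_bmax _ _ _ (tokS tok) _ hb).
  rewrite /tokS; apply: ler_sum => q qB.
  have qD : q \notin D by have := hn q; rewrite qB andbT.
  case: (boolP (q \in Phat)) => qP; first by rewrite tP // ltW.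
  by rewrite tO.
case: (pickP (fun _ : Pl => true)) => [p0 _|hemp].
  have Tpos : 0 < \sum_q tok q.
    by rewrite (bigD1 p0) //= ltr_wpDr // ?sumr_ge0 // => *; apply: ltW.
  have [p tp] : exists p, 0 < tok' p.
    apply/existsP; apply: contraT; rewrite negb_exists => /forallP hn.
    have : \sum_q tok' q <= 0.
      by apply: sumr_le0 => q _; have := hn q; rewrite -leNgt.
    by rewrite Tsum leNgt Tpos.
  have M'pos : 0 < M'.
    have hb : bloc C u p \in blocs C u by apply/imsetP; exists p.
    apply: lt_le_trans (@le_bmax _ _ _ (tokS tok') _ hb).
    apply: lt_le_trans tp _; rewrite /tokS (bigD1 p) /=; last by rewrite inE Crefl.
    by rewrite lerDl sumr_ge0.
  rewrite /VBEmin -/M -/M' Tsum lerN2 /log2 ler_pM2r; last by rewrite invr_gt0 ln_gt0 // ltr1n.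
  rewrite ler_ln ?posrE ?divr_gt0 ?ler_pM2r ?invr_gt0 //.
  exact: lt_le_trans M'pos M'M.
have E : M = M' by rewrite /M /M' !big_pred0 // => B; apply/imsetP => -[p]; have := hemp p.
by rewrite /VBEmin -/M -/M' Tsum E.
Qed.
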